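(* Let $\mathit{HWQ}$ be the Herlihy\&Wing queue described in the context, with the dequeue linearization point $lin(deq,d,k)$ emitted exactly when a dequeue $k$ executes a $\mathtt{swap}$ returning a non-null value $d$. Then there exists a $(C\cup R\cup Lin(deq))$-forward simulation from $\mathit{HWQ}$ to $AbsQ$; consequently $\mathit{HWQ}$ is a $(C\cup R\cup Lin(deq))$-refinement of $AbsQ_0$, and in particular refines (is linearizable with respect to) $AbsQ_0$.
   Context: $\mathit{HWQ}$ is the queue implementation (methods $enq$, $deq$; values $\mathbb{N}\cup\{\mathtt{EMPTY}\}$, no value enqueued twice) whose shared state is an unbounded array $\mathtt{items}$ (all entries initially $\mathtt{null}$) and an integer counter $\mathtt{back}$ (initially $0$), executed by arbitrarily many concurrent operations, each statement being atomic. $enq(x)$: $\mathtt{i} := \mathtt{back}$; $\mathtt{back}:=\mathtt{back}+1$ (one atomic step); then $\mathtt{items[i]} := x$; return. $deq()$: repeat forever: $\mathtt{range}:=\mathtt{back}-1$; for $\mathtt{i}=0,\dots,\mathtt{range}$: $\mathtt{x}:=\mathtt{swap}(\mathtt{items[i]},\mathtt{null})$ (atomically read $\mathtt{items[i]}$ into $\mathtt{x}$ and set it to $\mathtt{null}$); if $\mathtt{x}\ne\mathtt{null}$ return $\mathtt{x}$. It is viewed as an LTS whose labels are call/return actions, $lin(deq,d,k)$ actions as stated, and internal (non-observable) actions for all other steps. Call actions $inv(m,d,k)$ and return actions $ret(m,d,k)$ form sets $C,R$; $Lin(deq)=\{lin(deq,d,k)\}$; traces of an LTS are label sequences of finite executions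 from the initial state and $Tr(A)|\Gamma$ their projections onto $\Gamma$. A $\Gamma$-refinement of $L_2$ by $L_1$ means $Tr(L_1)|\Gamma\subseteq Tr(L_2)|\Gamma$; refinement means $H(L_1)\subseteq H(L_2)$ with $H$ the projections of traces onto $C\cup R$. A $\Gamma$-forward simulation from $L_1$ to $L_2$ (with $C\cup R\subseteq\Gamma\subseteq\Sigma_1\cap\Sigma_2$) is a relation $fs$ between states with $fs[s^1_0]=\{s^2_0\}$ such that every $L_1$-step $s\xrightarrow{\gamma}s'$ with $\gamma\in\Gamma$ and $u\in fs[s]$ is matched by $u\xrightarrow{\sigma}u'$ with $u'\in fs[s']$, $\sigma$ containing $\gamma$ exactly once and otherwise only labels in $\Sigma_2\setminus\Gamma$; and every step with label $e\notin\Gamma$ is matched by $u\xrightarrow{\sigma}u'$, $u'\in fs[s']$, $\sigma\in(\Sigma_2\setminus\Gamma)^*$. $AbsQ_0$: states $(\sigma,in,rv,cp)$; $inv(enq,d,k)$: $in(k)=d,cp(k)=A_1$; $lin(enq,d,k)$ ($cp(k)=A_1$, $in(k)=d$): $\sigma:=d\cdot\sigma$, $cp(k)=A$; $ret(enq,k)$ ($cp(k)=A$): $cp(k)=A_2$; $inv(deq,k)$: $cp(k)=R_1$; $lin(deq,d,k)$ ($cp(k)=R_1$, $\sigma=\sigma'\cdot d$): $\sigma:=\sigma'$, $rv(k)=d$, $cp(k)=R_2$; $lin(deq,\mathtt{EMPTY},k)$ ($cp(k)=R_1,\sigma=\epsilon$): $rv(k)=\mathtt{EMPTY}$, $cp(k)=R_2$;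 $ret(deq,d,k)$ ($cp(k)=R_2,rv(k)=d$): $cp(k)=R_3$; calls require $k\notin dom(cp)$ and enqueued values $\ne\mathtt{EMPTY}$. $AbsQ$: alphabet $C\cup R\cup Lin(deq)$; states $(O,<,\ell,rv,cp)$, $O\subseteq\mathbb{N}$, $<$ strict partial order on $O$, $\ell:O\to\mathit{Vals}\times\{\mathtt{PEND},\mathtt{COMP}\}$, $rv,cp$ partial functions; initially all empty. $inv(enq,d,k)$ ($k\notin dom(cp)$, $d\ne\mathtt{EMPTY}$): add $k$ to $O$ ordered after every $k''\in O$ with $\ell_2(k'')=\mathtt{COMP}$, $\ell(k)=(d,\mathtt{PEND})$, $cp(k)=A_1$; $ret(enq,k)$ ($cp(k)=A_1$): if $k\in O$ change its flag to $\mathtt{COMP}$; set $cp(k)=A_2$; $inv(deq,k)$: $cp(k)=R_1$; $lin(deq,d,k)$ ($cp(k)=R_1$, $d\ne\mathtt{EMPTY}$, some $<$-minimal $k'\in O$ has $\ell_1(k')=d$): remove $k'$ from $O$ and from $<$, $rv(k)=d$, $cp(k)=R_2$; $lin(deq,\mathtt{EMPTY},k)$ ($cp(k)=R_1$, every $o\in O$ flagged $\mathtt{PEND}$): $rv(k)=\mathtt{EMPTY}$, $cp(k)=R_2$; $ret(deq,d,k)$ ($cp(k)=R_2$, $rv(k)=d$): $cp(k)=R_3$. *)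

(* Defs.v *)
From Stdlib Require Import List Arith Bool.
Import ListNotations.

Inductive val : Type := VNat (n : nat) | EMPTY.

Inductive label : Type :=
| InvEnq (d : val) (k : nat)
| InvDeq (k : nat)
| RetEnq (k : nat)
| RetDeq (d : val) (k : nat)
| LinEnq (d : val) (k : nat)
| LinDeq (d : val) (k : nat)
| Tau.

Definition isC (l : label) : bool :=
  match l with InvEnq _ _ | InvDeq _ => true | _ => false end.
Definition isR (l : label) : bool :=
  match l with RetEnq _ | RetDeq _ _ => true | _ => false end.
Definition isCR (l : label) : bool := isC l || isR l.
Definition isLinDeq (l : label) : bool :=
  match l with LinDeq _ _ => true | _ => false end.
Definition isLinEnq (l : label) : bool :=
  match l with LinEnq _ _ => true | _ => false end.

Definition GammaCRL (l : label) : bool := isCR l || isLinDeq l.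

Record LTS : Type := {
  St : Type;
  init : St;
  step : St -> label -> St -> Prop;
  alpha : label -> bool
}.

Inductive steps (L : LTS) : St L -> list label -> St L -> Prop :=
| steps_nil : forall s, steps L s [] s
| steps_cons : forall s l s1 sig s2,
    step L s l s1 -> steps L s1 sig s2 -> steps L s (l :: sig) s2.

Definition trace (L : LTS) (t : list label) : Prop :=
  exists s, steps L (init L) t s.

Definition Gamma_refines (G : label -> bool) (L1 L2 : LTS) : Prop :=
  forall t, trace L1 t -> exists t', trace L2 t' /\ filter G t = filter G t'.

Definition refines (L1 L2 : LTS) : Prop :=
  forall t, trace L1 t -> exists t', trace L2 t' /\ filter isCR t = filter isCR t'.

Definition fwd_sim (G : label -> bool) (L1 L2 : LTS)
    (fs : St L1 -> St L2 -> Prop) : Prop :=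
  (forall l, isCR l = true -> G l = true) /\
  (forall l, G l = true -> alpha L1 l = true /\ alpha L2 l = true) /\
  (forall u, fs (init L1) u <-> u = init L2) /\
  (forall s g s' u, step L1 s g s' -> G g = true -> fs s u ->
     exists sig1 sig2 u',
       forallb (fun l => alpha L2 l && negb (G l)) sig1 = true /\
       forallb (fun l => alpha L2 l && negb (G l)) sig2 = true /\
       steps L2 u (sig1 ++ g :: sig2) u' /\ fs s' u') /\
  (forall s e s' u, step L1 s e s' -> G e = false -> fs s u ->
     exists sig u',
       forallb (fun l => alpha L2 l && negb (G l)) sig = true /\
       steps L2 u sig u' /\ fs s' u').

Definition upd {A : Type} (f : nat -> A) (k : nat) (v : A) : nat -> A :=
  fun o => if Nat.eqb o k then v else f o.

Inductive hloc : Type :=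
| HE1 (x : nat)
| HE2 (x : nat) (i : nat)
| HE3 (x : nat)
| HE4 (x : nat)
| HD1
| HD2 (n : nat) (i : nat)  (* deq in the for loop, range = n - 1, next index i *)
| HD3 (x : nat)
| HD4 (x : nat).

Definition enq_value (h : hloc) : option nat :=
  match h with
  | HE1 x | HE2 x _ | HE3 x | HE4 x => Some x
  | _ => None
  end.

Record hstate : Type := {
  items : nat -> option nat;
  back : nat;
  hloc_of : nat -> option hloc
}.

Definition hinit : hstate :=
  {| items := fun _ => None; back := 0; hloc_of := fun _ => None |}.

Inductive hstep : hstate -> label -> hstate -> Prop :=
| h_inv_enq : forall it b lc x k,
    lc k = None ->
    (* no value is enqueued twice *)
    (forall k' h, lc k' = Some h -> enq_value h <> Some x) ->
    hstep {| items := it; back := b; hloc_of := lc |} (InvEnq (VNat x) k)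
          {| items := it; back := b; hloc_of := upd lc k (Some (HE1 x)) |}
| h_enq_fai : forall it b lc x k,
    lc k = Some (HE1 x) ->
    hstep {| items := it; back := b; hloc_of := lc |} Tau
          {| items := it; back := b + 1; hloc_of := upd lc k (Some (HE2 x b)) |}
| h_enq_write : forall it b lc x i k,
    lc k = Some (HE2 x i) ->
    hstep {| items := it; back := b; hloc_of := lc |} Tau
          {| items := upd it i (Some x); back := b; hloc_of := upd lc k (Some (HE3 x)) |}
| h_ret_enq : forall it b lc x k,
    lc k = Some (HE3 x) ->
    hstep {| items := it; back := b; hloc_of := lc |} (RetEnq k)
          {| items := it; back := b; hloc_of := upd lc k (Some (HE4 x)) |}
| h_inv_deq : forall it b lc k,
    lc k = None ->
    hstep {| items := it; back := b; hloc_of := lc |} (InvDeq k)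
          {| items := it; back := b; hloc_of := upd lc k (Some HD1) |}
| h_deq_range : forall it b lc k,
    lc k = Some HD1 ->
    hstep {| items := it; back := b; hloc_of := lc |} Tau
          {| items := it; back := b; hloc_of := upd lc k (Some (HD2 b 0)) |}
| h_deq_swap_null : forall it b lc n i k,
    lc k = Some (HD2 n i) -> i < n -> it i = None ->
    hstep {| items := it; back := b; hloc_of := lc |} Tau
          {| items := upd it i None; back := b; hloc_of := upd lc k (Some (HD2 n (S i))) |}
| h_deq_swap_val : forall it b lc n i x k,
    lc k = Some (HD2 n i) -> i < n -> it i = Some x ->
    hstep {| items := it; back := b; hloc_of := lc |} (LinDeq (VNat x) k)
          {| items := upd it i None; back := b; hloc_of := upd lc k (Some (HD3 x)) |}
| h_deq_restart : forall it b lc n i k,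
    lc k = Some (HD2 n i) -> n <= i ->
    hstep {| items := it; back := b; hloc_of := lc |} Tau
          {| items := it; back := b; hloc_of := upd lc k (Some HD1) |}
| h_ret_deq : forall it b lc x k,
    lc k = Some (HD3 x) ->
    hstep {| items := it; back := b; hloc_of := lc |} (RetDeq (VNat x) k)
          {| items := it; back := b; hloc_of := upd lc k (Some (HD4 x)) |}.

Definition HWQ : LTS :=
  {| St := hstate; init := hinit; step := hstep;
     alpha := fun l => isCR l || isLinDeq l || match l with Tau => true | _ => false end |}.

Inductive cpc : Type := A1 | A | A2 | R1 | R2 | R3.


Inductive flag : Type := PEND | COMP.

Record astate : Type := {
  aO : nat -> bool;
  alt : nat -> nat -> Prop;
  alab : nat -> val * flag;         (* ℓ (meaningful on O) *)
  arv : nat -> option val;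
  acp : nat -> option cpc
}.

Definition ainit : astate :=
  {| aO := fun _ => false; alt := fun _ _ => False; alab := fun _ => (EMPTY, PEND);
     arv := fun _ => None; acp := fun _ => None |}.

Inductive astep : astate -> label -> astate -> Prop :=
| a_inv_enq : forall O lt lab rv cp d k,
    cp k = None -> d <> EMPTY ->
    astep {| aO := O; alt := lt; alab := lab; arv := rv; acp := cp |} (InvEnq d k)
          {| aO := upd O k true;
             alt := fun a b => lt a b \/ (b = k /\ O a = true /\ snd (lab a) = COMP);
             alab := upd lab k (d, PEND); arv := rv; acp := upd cp k (Some A1) |}
| a_ret_enq : forall O lt lab rv cp k,
    cp k = Some A1 ->
    astep {| aO := O; alt := lt; alab := lab; arv := rv; acp := cp |} (RetEnq k)
          {| aO := O; alt := lt;
             alab := if O k then upd lab k (fst (lab k), COMP) else lab;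
             arv := rv; acp := upd cp k (Some A2) |}
| a_inv_deq : forall O lt lab rv cp k,
    cp k = None ->
    astep {| aO := O; alt := lt; alab := lab; arv := rv; acp := cp |} (InvDeq k)
          {| aO := O; alt := lt; alab := lab; arv := rv; acp := upd cp k (Some R1) |}
| a_lin_deq : forall O lt lab rv cp d k k',
    cp k = Some R1 -> d <> EMPTY ->
    O k' = true -> (forall o, O o = true -> ~ lt o k') -> fst (lab k') = d ->
    astep {| aO := O; alt := lt; alab := lab; arv := rv; acp := cp |} (LinDeq d k)
          {| aO := upd O k' false;
             alt := fun a b => lt a b /\ a <> k' /\ b <> k';
             alab := lab; arv := upd rv k (Some d); acp := upd cp k (Some R2) |}
| a_lin_deq_empty : forall O lt lab rv cp k,
    cp k = Some R1 ->
    (forall o, O o = true -> snd (lab o) = PEND) ->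
    astep {| aO := O; alt := lt; alab := lab; arv := rv; acp := cp |} (LinDeq EMPTY k)
          {| aO := O; alt := lt; alab := lab;
             arv := upd rv k (Some EMPTY); acp := upd cp k (Some R2) |}
| a_ret_deq : forall O lt lab rv cp d k,
    cp k = Some R2 -> rv k = Some d ->
    astep {| aO := O; alt := lt; alab := lab; arv := rv; acp := cp |} (RetDeq d k)
          {| aO := O; alt := lt; alab := lab; arv := rv; acp := upd cp k (Some R3) |}.

Definition AbsQ : LTS :=
  {| St := astate; init := ainit; step := astep;
     alpha := fun l => isCR l || isLinDeq l |}.

Record qstate : Type := {
  qsig : list val;          (* σ; enqueue prepends, dequeue removes the last element *)
  qin : nat -> option val;
  qrv : nat -> option val;
  qcp : nat -> option cpc
}.

Definition qinit : qstate :=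
  {| qsig := []; qin := fun _ => None; qrv := fun _ => None; qcp := fun _ => None |}.

Inductive qstep : qstate -> label -> qstate -> Prop :=
| q_inv_enq : forall s i rv cp d k,
    cp k = None -> d <> EMPTY ->
    qstep {| qsig := s; qin := i; qrv := rv; qcp := cp |} (InvEnq d k)
          {| qsig := s; qin := upd i k (Some d); qrv := rv; qcp := upd cp k (Some A1) |}
| q_lin_enq : forall s i rv cp d k,
    cp k = Some A1 -> i k = Some d ->
    qstep {| qsig := s; qin := i; qrv := rv; qcp := cp |} (LinEnq d k)
          {| qsig := d :: s; qin := i; qrv := rv; qcp := upd cp k (Some A) |}
| q_ret_enq : forall s i rv cp k,
    cp k = Some A ->
    qstep {| qsig := s; qin := i; qrv := rv; qcp := cp |} (RetEnq k)
          {| qsig := s; qin := i; qrv := rv; qcp := upd cp k (Some A2) |}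
| q_inv_deq : forall s i rv cp k,
    cp k = None ->
    qstep {| qsig := s; qin := i; qrv := rv; qcp := cp |} (InvDeq k)
          {| qsig := s; qin := i; qrv := rv; qcp := upd cp k (Some R1) |}
| q_lin_deq : forall s' i rv cp d k,
    cp k = Some R1 ->
    qstep {| qsig := s' ++ [d]; qin := i; qrv := rv; qcp := cp |} (LinDeq d k)
          {| qsig := s'; qin := i; qrv := upd rv k (Some d); qcp := upd cp k (Some R2) |}
| q_lin_deq_empty : forall i rv cp k,
    cp k = Some R1 ->
    qstep {| qsig := []; qin := i; qrv := rv; qcp := cp |} (LinDeq EMPTY k)
          {| qsig := []; qin := i; qrv := upd rv k (Some EMPTY); qcp := upd cp k (Some R2) |}
| q_ret_deq : forall s i rv cp d k,
    cp k = Some R2 -> rv k = Some d ->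
    qstep {| qsig := s; qin := i; qrv := rv; qcp := cp |} (RetDeq d k)
          {| qsig := s; qin := i; qrv := rv; qcp := upd cp k (Some R3) |}.

Definition AbsQ0 : LTS :=
  {| St := qstate; init := qinit; step := qstep;
     alpha := fun l => isCR l || isLinDeq l || isLinEnq l |}.

(* Main.v *)
Require Import Defs.
From Stdlib Require Import List Arith Bool Lia FunctionalExtensionality.
Import ListNotations.

Lemma upd_eq {A} (f : nat -> A) k v : upd f k v k = v.
Proof. unfold upd. now rewrite Nat.eqb_refl. Qed.
Lemma upd_neq {A} (f : nat -> A) k v o : o <> k -> upd f k v o = f o.
Proof. intros H. unfold upd. destruct (Nat.eqb_spec o k); congruence. Qed.

Ltac case_eqb := repeat match goal with
 | |- context [Nat.eqb ?a ?b] => destruct (Nat.eqb_spec a b); try subst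
 | H : context [Nat.eqb ?a ?b] |- _ => destruct (Nat.eqb_spec a b); try subst
 end.

Definition slotted (h : option hloc) : Prop :=
  match h with Some (HE2 _ _) | Some (HE3 _) | Some (HE4 _) => True | _ => False end.
Definition cpmap (h : option hloc) : option cpc :=
  match h with None => None
  | Some (HE1 _) | Some (HE2 _ _) | Some (HE3 _) => Some A1
  | Some (HE4 _) => Some A2
  | Some HD1 | Some (HD2 _ _) => Some R1
  | Some (HD3 _) => Some R2 | Some (HD4 _) => Some R3 end.

Record HInv (s : hstate) (u : astate) (idx : nat -> nat) : Prop := {
  I_cp : forall k, acp u k = cpmap (hloc_of s k);
  I_rv : forall k x, hloc_of s k = Some (HD3 x) -> arv u k = Some (VNat x);
  I_lab : forall k, aO u k = true -> exists h x, hloc_of s k = Some h /\ enq_value h = Some x /\ fst (alab u k) = VNat x /\ (snd (alab u k) = COMP <-> h = HE4 x);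
  I_O1 : forall k x, hloc_of s k = Some (HE1 x) -> aO u k = true;
  I_O2 : forall k x i, hloc_of s k = Some (HE2 x i) -> aO u k = true;
  I_idx : forall k x i, hloc_of s k = Some (HE2 x i) -> idx k = i;
  I_back : forall k, slotted (hloc_of s k) -> idx k < back s;
  I_inj : forall k1 k2, slotted (hloc_of s k1) -> slotted (hloc_of s k2) -> idx k1 = idx k2 -> k1 = k2;
  I_items : forall k x, aO u k = true -> (hloc_of s k = Some (HE3 x) \/ hloc_of s k = Some (HE4 x)) -> items s (idx k) = Some x;
  I_wit : forall i x, items s i = Some x -> exists k, aO u k = true /\ (hloc_of s k = Some (HE3 x) \/ hloc_of s k = Some (HE4 x)) /\ idx k = i;
  I_lt : forall a b, alt u a b -> aO u a = true /\ aO u b = true /\ exists x, hloc_of s a = Some (HE4 x);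
  I_ltidx : forall a b, alt u a b -> slotted (hloc_of s b) -> idx a < idx b;
  I_range : forall k n j, hloc_of s k = Some (HD2 n j) -> n <= back s;
  I_scan : forall k n j a b, hloc_of s k = Some (HD2 n j) -> alt u a b -> idx a < j -> slotted (hloc_of s b) -> n <= idx b
}.


Ltac dh Hi := destruct Hi as [Hcp Hrv Hlab HO1 HO2 Hidx Hback Hinj Hitems Hwit Hlt Hltidx Hrange Hscan].

Lemma fai_inv it b lc x k u idx : lc k = Some (HE1 x) ->
  HInv {| items := it; back := b; hloc_of := lc |} u idx ->
  HInv {| items := it; back := b + 1; hloc_of := upd lc k (Some (HE2 x b)) |} u (upd idx k b).
Proof.
  intros Hk Hi; dh Hi; cbn in *; constructor; cbn.
  - intros j; unfold upd; destruct (Nat.eqb_spec j k) as [->|]; [rewrite Hcp, Hk; reflexivity | apply Hcp].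
  - intros j y; unfold upd; destruct (Nat.eqb_spec j k); [discriminate | apply Hrv].
  - intros j Hj; unfold upd; destruct (Nat.eqb_spec j k) as [->|].
    + destruct (Hlab k Hj) as (h & y & Hh & Hev & Hf & Hs). rewrite Hk in Hh; injection Hh as <-.
      cbn in Hev; injection Hev as <-. exists (HE2 x b), x. repeat split; auto.
      * intro C; apply Hs in C; discriminate.
      * intro C; discriminate.
    + apply Hlab; auto.
  - intros j y; unfold upd; destruct (Nat.eqb_spec j k); [discriminate | apply HO1].
  - intros j y i; unfold upd; destruct (Nat.eqb_spec j k) as [->|]; [intros _; eapply HO1; eauto | eauto].
  - intros j y i; unfold upd; destruct (Nat.eqb_spec j k) as [->|]; intros H; [injection H; auto | eauto].
  - intros j; unfold upd; destruct (Nat.eqb_spec j k); [lia | intros H; specialize (Hback j H); lia].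
  - intros k1 k2; unfold upd; destruct (Nat.eqb_spec k1 k); destruct (Nat.eqb_spec k2 k); subst; auto.
    + intros _ H2 E; specialize (Hback k2 H2); lia.
    + intros H1 _ E; specialize (Hback k1 H1); lia.
  - intros j y HO; unfold upd; destruct (Nat.eqb_spec j k); [intros [H|H]; discriminate | intros H; apply Hitems; auto].
  - intros i y Hi; destruct (Hwit i y Hi) as (w & Hw1 & Hw2 & Hw3). exists w; unfold upd;
      destruct (Nat.eqb_spec w k) as [->|]; [rewrite Hk in Hw2; destruct Hw2; discriminate | auto].
  - intros a c H; destruct (Hlt a c H) as (? & ? & y & Hy); unfold upd;
      destruct (Nat.eqb_spec a k) as [->|]; [rewrite Hk in Hy; discriminate | eauto].
  - intros a c H; destruct (Hlt a c H) as (_ & _ & y & Hy). unfold upd.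
    destruct (Nat.eqb_spec a k); [congruence|].
    destruct (Nat.eqb_spec c k) as [->|].
    + intros _. apply Hback. rewrite Hy; exact I.
    + intros Hs; apply Hltidx; auto.
  - intros j n i; unfold upd; destruct (Nat.eqb_spec j k); [discriminate | intros H; specialize (Hrange _ _ _ H); lia].
  - intros j n i a c; unfold upd; destruct (Nat.eqb_spec j k); [discriminate|]. intros Hj Hac.
    destruct (Hlt a c Hac) as (_&_&y&Hy). destruct (Nat.eqb_spec a k); [congruence|].
    destruct (Nat.eqb_spec c k) as [->|].
    + intros _ _. eapply Hrange; eauto.
    + intros; eapply Hscan; eauto.
Qed.

Lemma write_inv it b lc x i k u idx : lc k = Some (HE2 x i) ->
  HInv {| items := it; back := b; hloc_of := lc |} u idx ->
  HInv {| items := upd it i (Some x); back := b; hloc_of := upd lc k (Some (HE3 x)) |} u idx.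
Proof.
  intros Hk Hi; dh Hi; cbn in *.
  assert (Hsl : forall j, slotted (upd lc k (Some (HE3 x)) j) -> slotted (lc j)).
  { intros j; unfold upd; destruct (Nat.eqb_spec j k) as [->|]; [intros _; rewrite Hk; exact I | auto]. }
  assert (HOk : aO u k = true) by (eapply HO2; eauto).
  assert (Hik : idx k = i) by (eapply Hidx; eauto).
  constructor; cbn.
  - intros j; unfold upd; destruct (Nat.eqb_spec j k) as [->|]; [rewrite Hcp, Hk; reflexivity | apply Hcp].
  - intros j y; unfold upd; destruct (Nat.eqb_spec j k); [discriminate | apply Hrv].
  - intros j Hj; unfold upd; destruct (Nat.eqb_spec j k) as [->|].
    + destruct (Hlab k Hj) as (h & y & Hh & Hev & Hf & Hs). rewrite Hk in Hh; injection Hh as <-.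
      cbn in Hev; injection Hev as <-. exists (HE3 x), x. repeat split; auto.
      * intro C; apply Hs in C; discriminate.
      * intro C; discriminate.
    + apply Hlab; auto.
  - intros j y; unfold upd; destruct (Nat.eqb_spec j k); [discriminate | apply HO1].
  - intros j y i'; unfold upd; destruct (Nat.eqb_spec j k); [discriminate | eauto].
  - intros j y i'; unfold upd; destruct (Nat.eqb_spec j k); [discriminate | eauto].
  - intros j H; apply Hback, Hsl, H.
  - intros k1 k2 H1 H2; apply Hinj; auto.
  - intros j y HOj; destruct (Nat.eq_dec j k) as [->|Hjk].
    + rewrite upd_eq. intros [H|H]; [injection H as <-|discriminate]. rewrite Hik, upd_eq; auto.
    + rewrite (upd_neq _ _ _ _ Hjk). intros H. rewrite upd_neq. apply Hitems; auto.
      intro E. apply Hjk. apply Hinj; auto. destruct H as [H|H]; rewrite H; exact I. rewrite Hk; exact I. congruence.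
  - intros i0 y; unfold upd at 1; destruct (Nat.eqb_spec i0 i) as [->|].
    + intros H; injection H as <-. exists k. split; auto. rewrite upd_eq. auto.
    + intros H; destruct (Hwit _ _ H) as (w & Hw1 & Hw2 & Hw3). exists w.
      destruct (Nat.eqb_spec w k) as [->|]; [rewrite Hk in Hw2; destruct Hw2; discriminate|].
      rewrite upd_neq; auto.
  - intros a c H; destruct (Hlt a c H) as (? & ? & y & Hy); unfold upd;
      destruct (Nat.eqb_spec a k) as [->|]; [rewrite Hk in Hy; discriminate | eauto].
  - intros a c H Hs; apply Hltidx; auto.
  - intros j n i'; unfold upd; destruct (Nat.eqb_spec j k); [discriminate | eauto].
  - intros j n i' a c; unfold upd at 1; destruct (Nat.eqb_spec j k); [discriminate|].
    intros; eapply Hscan; eauto.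
Qed.

Lemma range_inv it b lc k u idx : lc k = Some HD1 ->
  HInv {| items := it; back := b; hloc_of := lc |} u idx ->
  HInv {| items := it; back := b; hloc_of := upd lc k (Some (HD2 b 0)) |} u idx.
Proof.
  intros Hk Hi; dh Hi; cbn in *.
  assert (Hsl : forall j, slotted (upd lc k (Some (HD2 b 0)) j) -> slotted (lc j)).
  { intros j; unfold upd; destruct (Nat.eqb_spec j k) as [->|]; [intros [] | auto]. }
  constructor; cbn.
  - intros j; unfold upd; destruct (Nat.eqb_spec j k) as [->|]; [rewrite Hcp, Hk; reflexivity | apply Hcp].
  - intros j y; unfold upd; destruct (Nat.eqb_spec j k); [discriminate | apply Hrv].
  - intros j Hj; unfold upd; destruct (Nat.eqb_spec j k) as [->|].
    + destruct (Hlab k Hj) as (h & y & Hh & Hev & Hf & Hs). rewrite Hk in Hh; injection Hh as <-. discriminate.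
    + apply Hlab; auto.
  - intros j y; unfold upd; destruct (Nat.eqb_spec j k); [discriminate | apply HO1].
  - intros j y i'; unfold upd; destruct (Nat.eqb_spec j k); [discriminate | eauto].
  - intros j y i'; unfold upd; destruct (Nat.eqb_spec j k); [discriminate | eauto].
  - intros j H; apply Hback, Hsl, H.
  - intros k1 k2 H1 H2; apply Hinj; auto.
  - intros j y HOj; unfold upd; destruct (Nat.eqb_spec j k); [intros [H|H]; discriminate|]. eauto.
  - intros i0 y H; destruct (Hwit _ _ H) as (w & Hw1 & Hw2 & Hw3). exists w.
    unfold upd; destruct (Nat.eqb_spec w k) as [->|]; [rewrite Hk in Hw2; destruct Hw2; discriminate|]. auto.
  - intros a c H; destruct (Hlt a c H) as (? & ? & y & Hy); unfold upd;
      destruct (Nat.eqb_spec a k) as [->|]; [rewrite Hk in Hy; discriminate | eauto].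
  - intros a c H Hs; apply Hltidx; auto.
  - intros j n i'; unfold upd; destruct (Nat.eqb_spec j k); [intros H; injection H; lia | eauto].
  - intros j n i' a c; unfold upd at 1; destruct (Nat.eqb_spec j k).
    + intros H; injection H as <- <-. lia.
    + intros; eapply Hscan; eauto.
Qed.

Lemma swapnull_inv it b lc n i k u idx : lc k = Some (HD2 n i) -> it i = None ->
  HInv {| items := it; back := b; hloc_of := lc |} u idx ->
  HInv {| items := upd it i None; back := b; hloc_of := upd lc k (Some (HD2 n (S i))) |} u idx.
Proof.
  intros Hk Hit Hi.
  assert (E : upd it i None = it).
  { apply functional_extensionality; intros y; unfold upd; destruct (Nat.eqb_spec y i); subst; auto. }
  rewrite E. dh Hi; cbn in *.
  assert (Hsl : forall j, slotted (upd lc k (Some (HD2 n (S i))) j) -> slotted (lc j)).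
  { intros j; unfold upd; destruct (Nat.eqb_spec j k) as [->|]; [intros [] | auto]. }
  constructor; cbn.
  - intros j; unfold upd; destruct (Nat.eqb_spec j k) as [->|]; [rewrite Hcp, Hk; reflexivity | apply Hcp].
  - intros j y; unfold upd; destruct (Nat.eqb_spec j k); [discriminate | apply Hrv].
  - intros j Hj; unfold upd; destruct (Nat.eqb_spec j k) as [->|].
    + destruct (Hlab k Hj) as (h & y & Hh & Hev & Hf & Hs). rewrite Hk in Hh; injection Hh as <-. discriminate.
    + apply Hlab; auto.
  - intros j y; unfold upd; destruct (Nat.eqb_spec j k); [discriminate | apply HO1].
  - intros j y i'; unfold upd; destruct (Nat.eqb_spec j k); [discriminate | eauto].
  - intros j y i'; unfold upd; destruct (Nat.eqb_spec j k); [discriminate | eauto].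
  - intros j H; apply Hback, Hsl, H.
  - intros k1 k2 H1 H2; apply Hinj; auto.
  - intros j y HOj; unfold upd; destruct (Nat.eqb_spec j k); [intros [H|H]; discriminate|]. eauto.
  - intros i0 y H; destruct (Hwit _ _ H) as (w & Hw1 & Hw2 & Hw3). exists w.
    unfold upd; destruct (Nat.eqb_spec w k) as [->|]; [rewrite Hk in Hw2; destruct Hw2; discriminate|]. auto.
  - intros a c H; destruct (Hlt a c H) as (? & ? & y & Hy); unfold upd;
      destruct (Nat.eqb_spec a k) as [->|]; [rewrite Hk in Hy; discriminate | eauto].
  - intros a c H Hs; apply Hltidx; auto.
  - intros j n' i'; unfold upd; destruct (Nat.eqb_spec j k) as [->|]; [intros H; injection H as <- <-; eauto | eauto].
  - intros j n' i' a c; unfold upd at 1; destruct (Nat.eqb_spec j k) as [->|].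
    + intros H; injection H as <- <-. intros Hac Ha Hsc.
      destruct (Nat.eq_dec (idx a) i) as [Ea|Ea].
      * destruct (Hlt a c Hac) as (HOa & _ & y & Hy).
        specialize (Hitems a y HOa (or_intror Hy)). congruence.
      * eapply Hscan; eauto. lia.
    + intros; eapply Hscan; eauto.
Qed.

Lemma restart_inv it b lc n i k u idx : lc k = Some (HD2 n i) ->
  HInv {| items := it; back := b; hloc_of := lc |} u idx ->
  HInv {| items := it; back := b; hloc_of := upd lc k (Some HD1) |} u idx.
Proof.
  intros Hk Hi; dh Hi; cbn in *.
  assert (Hsl : forall j, slotted (upd lc k (Some HD1) j) -> slotted (lc j)).
  { intros j; unfold upd; destruct (Nat.eqb_spec j k) as [->|]; [intros [] | auto]. }
  constructor; cbn.
  - intros j; unfold upd; destruct (Nat.eqb_spec j k) as [->|]; [rewrite Hcp, Hk; reflexivity | apply Hcp].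
  - intros j y; unfold upd; destruct (Nat.eqb_spec j k); [discriminate | apply Hrv].
  - intros j Hj; unfold upd; destruct (Nat.eqb_spec j k) as [->|].
    + destruct (Hlab k Hj) as (h & y & Hh & Hev & Hf & Hs). rewrite Hk in Hh; injection Hh as <-. discriminate.
    + apply Hlab; auto.
  - intros j y; unfold upd; destruct (Nat.eqb_spec j k); [discriminate | apply HO1].
  - intros j y i'; unfold upd; destruct (Nat.eqb_spec j k); [discriminate | eauto].
  - intros j y i'; unfold upd; destruct (Nat.eqb_spec j k); [discriminate | eauto].
  - intros j H; apply Hback, Hsl, H.
  - intros k1 k2 H1 H2; apply Hinj; auto.
  - intros j y HOj; unfold upd; destruct (Nat.eqb_spec j k); [intros [H|H]; discriminate|]. eauto.
  - intros i0 y H; destruct (Hwit _ _ H) as (w & Hw1 & Hw2 & Hw3). exists w.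
    unfold upd; destruct (Nat.eqb_spec w k) as [->|]; [rewrite Hk in Hw2; destruct Hw2; discriminate|]. auto.
  - intros a c H; destruct (Hlt a c H) as (? & ? & y & Hy); unfold upd;
      destruct (Nat.eqb_spec a k) as [->|]; [rewrite Hk in Hy; discriminate | eauto].
  - intros a c H Hs; apply Hltidx; auto.
  - intros j n' i'; unfold upd; destruct (Nat.eqb_spec j k); [discriminate | eauto].
  - intros j n' i' a c; unfold upd at 1; destruct (Nat.eqb_spec j k); [discriminate|].
    intros; eapply Hscan; eauto.
Qed.

Lemma tau_step s s' u idx : hstep s Tau s' -> HInv s u idx -> exists idx', HInv s' u idx'.
Proof.
  intros Hs Hi. inversion Hs; subst.
  - eexists; eapply fai_inv; eauto.
  - eexists; eapply write_inv; eauto.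
  - eexists; eapply range_inv; eauto.
  - eexists; eapply swapnull_inv; eauto.
  - eexists; eapply restart_inv; eauto.
Qed.

Lemma inv_enq_sim it b lc x k u idx : lc k = None ->
  HInv {| items := it; back := b; hloc_of := lc |} u idx ->
  exists u', astep u (InvEnq (VNat x) k) u' /\
  HInv {| items := it; back := b; hloc_of := upd lc k (Some (HE1 x)) |} u' idx.
Proof.
  intros Hk Hi. destruct u as [O lt lab rv cp]. dh Hi; cbn in *.
  assert (HOk : O k = false).
  { destruct (O k) eqn:E; auto. destruct (Hlab k E) as (h & _ & Hh & _). congruence. }
  assert (Hsl : forall j, slotted (upd lc k (Some (HE1 x)) j) -> slotted (lc j)).
  { intros j; unfold upd; destruct (Nat.eqb_spec j k) as [->|]; [intros [] | auto]. }
  eexists; split.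
  { apply a_inv_enq; [rewrite Hcp, Hk; reflexivity | discriminate]. }
  constructor; cbn.
  - intros j; unfold upd; destruct (Nat.eqb_spec j k) as [->|]; [reflexivity | apply Hcp].
  - intros j y; unfold upd; destruct (Nat.eqb_spec j k); [discriminate | apply Hrv].
  - intros j Hj; destruct (Nat.eq_dec j k) as [->|Hjk]; [rewrite !upd_eq|rewrite !upd_neq in * by exact Hjk].  
    + exists (HE1 x), x. cbn. repeat split; discriminate.
    + apply Hlab; auto.
  - intros j y; unfold upd; destruct (Nat.eqb_spec j k); [auto | eauto].
  - intros j y i'; unfold upd; destruct (Nat.eqb_spec j k); [discriminate | eauto].
  - intros j y i'; unfold upd; destruct (Nat.eqb_spec j k); [discriminate | eauto].
  - intros j H; apply Hback, Hsl, H.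
  - intros k1 k2 H1 H2; apply Hinj; auto.
  - intros j y; unfold upd; destruct (Nat.eqb_spec j k); [intros _ [H|H]; discriminate|]. eauto.
  - intros i0 y H; destruct (Hwit _ _ H) as (w & Hw1 & Hw2 & Hw3). exists w.
    unfold upd; destruct (Nat.eqb_spec w k) as [->|]; [rewrite Hk in Hw2; destruct Hw2; discriminate|]. auto.
  - intros a c [H|(-> & HOa & Hca)].
    + destruct (Hlt a c H) as (HOa & HOc & y & Hy).
      assert (a <> k) by congruence. assert (c <> k) by congruence.
      rewrite !upd_neq by auto. eauto.
    + assert (Hak : a <> k) by congruence. rewrite (upd_neq O k _ a Hak), upd_eq, (upd_neq lc k _ a Hak).
      split; [auto|split; [auto|]]. destruct (Hlab a HOa) as (h & y & Hh & _ & _ & Hs).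
      exists y. rewrite Hh. f_equal. apply Hs, Hca.
  - intros a c [H|(-> & HOa & Hca)].
    + intros Hs. apply Hltidx; auto.
    + unfold upd; rewrite Nat.eqb_refl; intros [].
  - intros j n' i'; unfold upd; destruct (Nat.eqb_spec j k); [discriminate | eauto].
  - intros j n' i' a c; unfold upd at 1; destruct (Nat.eqb_spec j k); [discriminate|].
    intros Hj [H|(-> & HOa & Hca)].
    + intros; eapply Hscan; eauto.
    + unfold upd; rewrite Nat.eqb_refl; intros _ [].
Qed.

Lemma ret_enq_sim it b lc x k u idx : lc k = Some (HE3 x) ->
  HInv {| items := it; back := b; hloc_of := lc |} u idx ->
  exists u', astep u (RetEnq k) u' /\
  HInv {| items := it; back := b; hloc_of := upd lc k (Some (HE4 x)) |} u' idx.
Proof.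
  intros Hk Hi. destruct u as [O lt lab rv cp]. dh Hi; cbn in *.
  assert (Hsl : forall j, slotted (upd lc k (Some (HE4 x)) j) -> slotted (lc j)).
  { intros j; unfold upd; destruct (Nat.eqb_spec j k) as [->|]; [intros _; rewrite Hk; exact I | auto]. }
  eexists; split.
  { apply a_ret_enq; rewrite Hcp, Hk; reflexivity. }
  assert (Hlab' : forall j, j <> k -> (if O k then upd lab k (fst (lab k), COMP) else lab) j = lab j).
  { intros j Hj; destruct (O k); auto; apply upd_neq; auto. }
  constructor; cbn.
  - intros j; unfold upd; destruct (Nat.eqb_spec j k) as [->|]; [reflexivity | apply Hcp].
  - intros j y; unfold upd; destruct (Nat.eqb_spec j k); [discriminate | apply Hrv].
  - intros j Hj; destruct (Nat.eq_dec j k) as [->|Hjk].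
    + rewrite Hj, !upd_eq. destruct (Hlab k Hj) as (h & y & Hh & Hev & Hf & Hs).
      rewrite Hk in Hh; injection Hh as <-. cbn in Hev; injection Hev as <-.
      exists (HE4 x), x. cbn. repeat split; auto.
    + rewrite Hlab', !upd_neq by auto. apply Hlab; auto.
  - intros j y; unfold upd; destruct (Nat.eqb_spec j k); [discriminate | eauto].
  - intros j y i'; unfold upd; destruct (Nat.eqb_spec j k); [discriminate | eauto].
  - intros j y i'; unfold upd; destruct (Nat.eqb_spec j k); [discriminate | eauto].
  - intros j H; apply Hback, Hsl, H.
  - intros k1 k2 H1 H2; apply Hinj; auto.
  - intros j y HOj; unfold upd; destruct (Nat.eqb_spec j k) as [->|].
    + intros [H|H]; [discriminate| injection H as <-]. eapply Hitems; eauto.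
    + eauto.
  - intros i0 y H; destruct (Hwit _ _ H) as (w & Hw1 & Hw2 & Hw3). exists w.
    unfold upd; destruct (Nat.eqb_spec w k) as [->|]; [|auto].
    rewrite Hk in Hw2. destruct Hw2 as [Hw2|Hw2]; [injection Hw2 as <-|discriminate]. auto.
  - intros a c H; destruct (Hlt a c H) as (? & ? & y & Hy); unfold upd;
      destruct (Nat.eqb_spec a k) as [->|]; [rewrite Hk in Hy; discriminate | eauto].
  - intros a c H Hs; apply Hltidx; auto.
  - intros j n' i'; unfold upd; destruct (Nat.eqb_spec j k); [discriminate | eauto].
  - intros j n' i' a c; unfold upd at 1; destruct (Nat.eqb_spec j k); [discriminate|].
    intros; eapply Hscan; eauto.
Qed.

Lemma inv_deq_sim it b lc k u idx : lc k = None ->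
  HInv {| items := it; back := b; hloc_of := lc |} u idx ->
  exists u', astep u (InvDeq k) u' /\
  HInv {| items := it; back := b; hloc_of := upd lc k (Some HD1) |} u' idx.
Proof.
  intros Hk Hi. destruct u as [O lt lab rv cp]. dh Hi; cbn in *.
  assert (Hsl : forall j, slotted (upd lc k (Some HD1) j) -> slotted (lc j)).
  { intros j; unfold upd; destruct (Nat.eqb_spec j k) as [->|]; [intros [] | auto]. }
  eexists; split.
  { apply a_inv_deq; rewrite Hcp, Hk; reflexivity. }
  constructor; cbn.
  - intros j; unfold upd; destruct (Nat.eqb_spec j k) as [->|]; [reflexivity | apply Hcp].
  - intros j y; unfold upd; destruct (Nat.eqb_spec j k); [discriminate | apply Hrv].
  - intros j Hj; unfold upd; destruct (Nat.eqb_spec j k) as [->|].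
    + destruct (Hlab k Hj) as (h & y & Hh & _). congruence.
    + apply Hlab; auto.
  - intros j y; unfold upd; destruct (Nat.eqb_spec j k); [discriminate | eauto].
  - intros j y i'; unfold upd; destruct (Nat.eqb_spec j k); [discriminate | eauto].
  - intros j y i'; unfold upd; destruct (Nat.eqb_spec j k); [discriminate | eauto].
  - intros j H; apply Hback, Hsl, H.
  - intros k1 k2 H1 H2; apply Hinj; auto.
  - intros j y HOj; unfold upd; destruct (Nat.eqb_spec j k); [intros [H|H]; discriminate|]. eauto.
  - intros i0 y H; destruct (Hwit _ _ H) as (w & Hw1 & Hw2 & Hw3). exists w.
    unfold upd; destruct (Nat.eqb_spec w k) as [->|]; [rewrite Hk in Hw2; destruct Hw2; discriminate|]. auto.
  - intros a c H; destruct (Hlt a c H) as (? & ? & y & Hy); unfold upd;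
      destruct (Nat.eqb_spec a k) as [->|]; [rewrite Hk in Hy; discriminate | eauto].
  - intros a c H Hs; apply Hltidx; auto.
  - intros j n' i'; unfold upd; destruct (Nat.eqb_spec j k); [discriminate | eauto].
  - intros j n' i' a c; unfold upd at 1; destruct (Nat.eqb_spec j k); [discriminate|].
    intros; eapply Hscan; eauto.
Qed.

Lemma ret_deq_sim it b lc x k u idx : lc k = Some (HD3 x) ->
  HInv {| items := it; back := b; hloc_of := lc |} u idx ->
  exists u', astep u (RetDeq (VNat x) k) u' /\
  HInv {| items := it; back := b; hloc_of := upd lc k (Some (HD4 x)) |} u' idx.
Proof.
  intros Hk Hi. destruct u as [O lt lab rv cp]. dh Hi; cbn in *.
  assert (Hsl : forall j, slotted (upd lc k (Some (HD4 x)) j) -> slotted (lc j)).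
  { intros j; unfold upd; destruct (Nat.eqb_spec j k) as [->|]; [intros [] | auto]. }
  eexists; split.
  { apply a_ret_deq; [rewrite Hcp, Hk; reflexivity | apply Hrv; auto]. }
  constructor; cbn.
  - intros j; unfold upd; destruct (Nat.eqb_spec j k) as [->|]; [reflexivity | apply Hcp].
  - intros j y; unfold upd; destruct (Nat.eqb_spec j k); [discriminate | apply Hrv].
  - intros j Hj; unfold upd; destruct (Nat.eqb_spec j k) as [->|].
    + destruct (Hlab k Hj) as (h & y & Hh & Hev & _). rewrite Hk in Hh; injection Hh as <-. discriminate.
    + apply Hlab; auto.
  - intros j y; unfold upd; destruct (Nat.eqb_spec j k); [discriminate | eauto].
  - intros j y i'; unfold upd; destruct (Nat.eqb_spec j k); [discriminate | eauto].
  - intros j y i'; unfold upd; destruct (Nat.eqb_spec j k); [discriminate | eauto].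
  - intros j H; apply Hback, Hsl, H.
  - intros k1 k2 H1 H2; apply Hinj; auto.
  - intros j y HOj; unfold upd; destruct (Nat.eqb_spec j k); [intros [H|H]; discriminate|]. eauto.
  - intros i0 y H; destruct (Hwit _ _ H) as (w & Hw1 & Hw2 & Hw3). exists w.
    unfold upd; destruct (Nat.eqb_spec w k) as [->|]; [rewrite Hk in Hw2; destruct Hw2; discriminate|]. auto.
  - intros a c H; destruct (Hlt a c H) as (? & ? & y & Hy); unfold upd;
      destruct (Nat.eqb_spec a k) as [->|]; [rewrite Hk in Hy; discriminate | eauto].
  - intros a c H Hs; apply Hltidx; auto.
  - intros j n' i'; unfold upd; destruct (Nat.eqb_spec j k); [discriminate | eauto].
  - intros j n' i' a c; unfold upd at 1; destruct (Nat.eqb_spec j k); [discriminate|].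
    intros; eapply Hscan; eauto.
Qed.

Lemma swapval_sim it b lc n i x k u idx : lc k = Some (HD2 n i) -> i < n -> it i = Some x ->
  HInv {| items := it; back := b; hloc_of := lc |} u idx ->
  exists u', astep u (LinDeq (VNat x) k) u' /\
  HInv {| items := upd it i None; back := b; hloc_of := upd lc k (Some (HD3 x)) |} u' idx.
Proof.
  intros Hk Hin Hit Hi. destruct u as [O lt lab rv cp]. dh Hi; cbn in *.
  assert (Hsl : forall j, slotted (upd lc k (Some (HD3 x)) j) -> slotted (lc j)).
  { intros j; unfold upd; destruct (Nat.eqb_spec j k) as [->|]; [intros [] | auto]. }
  destruct (Hwit i x Hit) as (k' & HOk' & Hk' & Hik').
  assert (Hsk' : slotted (lc k')) by (destruct Hk' as [H|H]; rewrite H; exact I).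
  assert (Hkk : k <> k') by (intro; subst; destruct Hk' as [H|H]; congruence).
  eexists; split.
  { eapply a_lin_deq with (k' := k'); auto.
    - rewrite Hcp, Hk; reflexivity.
    - discriminate.
    - intros o HOo Hlto. specialize (Hltidx o k' Hlto Hsk').
      specialize (Hscan k n i o k' Hk Hlto ltac:(lia) Hsk'). lia.
    - destruct (Hlab k' HOk') as (h & y & Hh & Hev & Hf & _). rewrite Hf.
      destruct Hk' as [H|H]; rewrite H in Hh; injection Hh as <-; cbn in Hev; congruence. }
  constructor; cbn.
  - intros j; unfold upd; destruct (Nat.eqb_spec j k) as [->|]; [reflexivity | apply Hcp].
  - intros j y; unfold upd; destruct (Nat.eqb_spec j k); [intros H; injection H as <-; auto | apply Hrv].
  - intros j; unfold upd; destruct (Nat.eqb_spec j k'); [discriminate|]. intros Hj.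
    destruct (Nat.eqb_spec j k) as [->|].
    + destruct (Hlab k Hj) as (h & y & Hh & Hev & _). rewrite Hk in Hh; injection Hh as <-. discriminate.
    + apply Hlab; auto.
  - intros j y; unfold upd; destruct (Nat.eqb_spec j k); [discriminate|].
    destruct (Nat.eqb_spec j k') as [->|]; [destruct Hk' as [H|H]; congruence| eauto].
  - intros j y i'; unfold upd; destruct (Nat.eqb_spec j k); [discriminate|].
    destruct (Nat.eqb_spec j k') as [->|]; [destruct Hk' as [H|H]; congruence| eauto].
  - intros j y i'; unfold upd; destruct (Nat.eqb_spec j k); [discriminate | eauto].
  - intros j H; apply Hback, Hsl, H.
  - intros k1 k2 H1 H2; apply Hinj; auto.
  - intros j y; unfold upd; destruct (Nat.eqb_spec j k') as [|Hjk']; [discriminate|]. intros HOj.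
    destruct (Nat.eqb_spec j k); [intros [H|H]; discriminate|]. intros H.
    destruct (Nat.eqb_spec (idx j) i).
    + exfalso. apply Hjk'. apply Hinj; auto. destruct H as [H|H]; rewrite H; exact I. congruence.
    + eauto.
  - intros i0 y; unfold upd at 1; destruct (Nat.eqb_spec i0 i); [discriminate|]. intros H.
    destruct (Hwit _ _ H) as (w & Hw1 & Hw2 & Hw3). exists w.
    assert (w <> k') by congruence.
    assert (w <> k) by (intro; subst; destruct Hw2 as [Hw2|Hw2]; congruence).
    rewrite !upd_neq by auto. auto.
  - intros a c (H & Ha & Hc); destruct (Hlt a c H) as (? & ? & y & Hy).
    assert (a <> k) by congruence.
    rewrite !upd_neq by auto. eauto.
  - intros a c (H & _ & _) Hs; apply Hltidx; auto.
  - intros j n' i'; unfold upd; destruct (Nat.eqb_spec j k); [discriminate | eauto].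
  - intros j n' i' a c; unfold upd at 1; destruct (Nat.eqb_spec j k); [discriminate|].
    intros Hj (H & _ & _); intros; eapply Hscan; eauto.
Qed.

Definition AInv (u : astate) : Prop :=
  (forall k, aO u k = true -> (acp u k = Some A1 /\ snd (alab u k) = PEND) \/ (acp u k = Some A2 /\ snd (alab u k) = COMP)) /\
  (forall a b, alt u a b -> aO u a = true /\ aO u b = true /\ snd (alab u a) = COMP).

Lemma AInv_init : AInv ainit.
Proof. split; cbn; [discriminate | tauto]. Qed.

Lemma AInv_step u l u' : AInv u -> astep u l u' -> AInv u'.
Proof.
  intros [H1 H2] Hs; inversion Hs; subst; cbn in *; split; cbn.
  - intros j; unfold upd; destruct (Nat.eqb_spec j k) as [->|]; auto.
  - assert (HOk : O k = false) by (destruct (O k) eqn:E; auto; destruct (H1 k E) as [[C _]|[C _]]; congruence).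
    intros a b [Hab|(-> & HOa & Hc)].
    + destruct (H2 a b Hab) as (? & ? & ?). assert (a <> k) by congruence. assert (b <> k) by congruence.
      rewrite !upd_neq by auto. auto.
    + assert (a <> k) by congruence. rewrite !upd_neq by auto. rewrite upd_eq. repeat split; auto; rewrite upd_neq; auto.
  - intros j Hj. destruct (Nat.eq_dec j k) as [->|Hjk].
    + rewrite upd_eq. right; split; auto. rewrite Hj, upd_eq; auto.
    + rewrite upd_neq by auto. destruct (O k); [rewrite upd_neq by auto|]; auto.
  - intros a b Hab. destruct (H2 a b Hab) as (? & ? & Hc). repeat split; auto.
    destruct (O k) eqn:E; auto. unfold upd; destruct (Nat.eqb_spec a k) as [->|]; auto.
  - intros j Hj. destruct (Nat.eq_dec j k) as [->|Hjk].
    + destruct (H1 k Hj) as [[C _]|[C _]]; congruence.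
    + rewrite upd_neq by auto. auto.
  - auto.
  - intros j; unfold upd; destruct (Nat.eqb_spec j k'); [discriminate|]. intros Hj.
    destruct (Nat.eqb_spec j k) as [->|].
    + destruct (H1 k Hj) as [[C _]|[C _]]; congruence.
    + auto.
  - intros a b (Hab & Ha & Hb). destruct (H2 a b Hab) as (? & ? & ?). rewrite !upd_neq by auto. repeat split; auto.
  - intros j Hj. destruct (Nat.eq_dec j k) as [->|Hjk].
    + destruct (H1 k Hj) as [[C _]|[C _]]; congruence.
    + rewrite upd_neq by auto. auto.
  - auto.
  - intros j Hj. destruct (Nat.eq_dec j k) as [->|Hjk].
    + destruct (H1 k Hj) as [[C _]|[C _]]; congruence.
    + rewrite upd_neq by auto. auto.
  - auto.
Qed.

Fixpoint ok (R : nat -> nat -> Prop) (L : list nat) : Prop :=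
  match L with [] => True | x :: L' => (forall y, In y L' -> ~ R x y) /\ ok R L' end.

Lemma ok_mono (R R' : nat -> nat -> Prop) L :
  (forall x y, In x L -> In y L -> R' x y -> R x y) -> ok R L -> ok R' L.
Proof.
  induction L as [|x L IH]; cbn; auto. intros H [H1 H2]; split.
  - intros y Hy C. apply (H1 y Hy). apply H; auto.
  - apply IH; auto.
Qed.

Lemma ok_app R L1 L2 : ok R (L1 ++ L2) <-> ok R L1 /\ ok R L2 /\ (forall x y, In x L1 -> In y L2 -> ~ R x y).
Proof.
  induction L1 as [|x L1 IH]; cbn.
  - intuition.
  - rewrite IH. split.
    + intros (H1 & H2 & H3 & H4). repeat split; auto.
      * intros y Hy; apply H1, in_or_app; auto.
      * intros a b [<-|Ha] Hb; [apply H1, in_or_app; auto | auto].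
    + intros ((H1 & H2) & H3 & H4). repeat split; auto.
      intros y Hy; apply in_app_or in Hy as [Hy|Hy]; auto.
Qed.

Lemma ok_filter R f L : ok R L -> ok R (filter f L).
Proof.
  induction L as [|x L IH]; cbn; auto. intros [H1 H2].
  destruct (f x); cbn; auto. split; auto. intros y Hy; apply filter_In in Hy as [Hy _]; auto.
Qed.

Lemma NoDup_app_disj (l1 l2 : list nat) a : NoDup (l1 ++ l2) -> In a l1 -> ~ In a l2.
Proof.
  induction l1 as [|x l1 IH]; cbn; [tauto|]. intros Hn [<-|Ha].
  - inversion Hn; subst. intro C; apply H1, in_or_app; auto.
  - inversion Hn; subst. auto.
Qed.

Lemma existsb_In y W : existsb (Nat.eqb y) W = true <-> In y W.
Proof.
  rewrite existsb_exists. split.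
  - intros (x & Hx & E). apply Nat.eqb_eq in E; subst; auto.
  - intros H; exists y; split; auto; apply Nat.eqb_refl.
Qed.

Definition CPrel (c : option cpc) (qc : option cpc) (qi : option val) (inL : Prop) (o : bool) (v : val) : Prop :=
  match c with
  | None => qc = None /\ qi = None
  | Some A1 => qi = Some v /\ ((qc = Some A1 /\ o = true /\ ~ inL) \/ (qc = Some A /\ (o = false \/ inL)))
  | Some A2 => qi = Some v /\ qc = Some A2
  | Some A => False
  | Some R1 => qi = None /\ qc = Some R1
  | Some R2 => qi = None /\ qc = Some R2
  | Some R3 => qi = None /\ qc = Some R3
  end.

Lemma CPrel_iff c qc qi P P' o v : (P <-> P') -> CPrel c qc qi P o v -> CPrel c qc qi P' o v.
Proof. intros E; destruct c as [[]|]; cbn; tauto. Qed.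

Definition B (u : astate) (q : qstate) : Prop :=
  exists L, qsig q = map (fun k => fst (alab u k)) L /\ NoDup L /\
    (forall k, In k L -> aO u k = true) /\
    (forall k, aO u k = true -> snd (alab u k) = COMP -> In k L) /\
    ok (alt u) L /\ (forall k, qrv q k = arv u k) /\
    (forall k, CPrel (acp u k) (qcp q k) (qin q k) (In k L) (aO u k) (fst (alab u k))).

Lemma B_init : B ainit qinit.
Proof.
  exists []; cbn; repeat split; auto; try tauto; try constructor; discriminate.
Qed.

Lemma B_init_inv q : B ainit q -> q = qinit.
Proof.
  intros (L & Hs & Hnd & HinO & _ & _ & Hrv & Hcp). cbn in *.
  assert (L = []) by (destruct L as [|x L]; auto; specialize (HinO x (or_introl eq_refl)); discriminate).
  subst. destruct q as [s i rv cp]; cbn in *. subst. unfold qinit. f_equal;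
  apply functional_extensionality; intros k; auto; apply (Hcp k).
Qed.

Lemma B_step u l u' q : AInv u -> astep u l u' -> B u q -> exists q', B u' q'.
Proof.
  intros [H1 H2] Hs (L & Hsig & Hnd & HinO & HCOMP & Hok & Hrv & Hcp).
  inversion Hs; subst; cbn in *.
  -
    assert (HOk : O k = false) by (destruct (O k) eqn:E; auto; destruct (H1 k E) as [[C _]|[C _]]; congruence).
    assert (HkL : ~ In k L) by (intro C; specialize (HinO k C); congruence).
    exists {| qsig := qsig q; qin := upd (qin q) k (Some d); qrv := qrv q; qcp := upd (qcp q) k (Some A1) |}.
    exists L; cbn. repeat split; auto.
    + rewrite Hsig. apply map_ext_in. intros y Hy. rewrite upd_neq; auto. intro; subst; auto.
    + intros y Hy. rewrite upd_neq by (intro; subst; auto). auto.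
    + intros y. unfold upd. destruct (Nat.eqb_spec y k) as [->|]; [intros _; discriminate|]. auto.
    + apply (ok_mono lt); auto. intros x y _ Hy [Hxy|(-> & _)]; [auto | contradiction].
    + intros y. destruct (Nat.eq_dec y k) as [->|Hyk].
      * rewrite !upd_eq. cbn. split; auto.
      * rewrite !upd_neq by auto. auto.
  -
    destruct (O k) eqn:HOk; [destruct (in_dec Nat.eq_dec k L) as [HkL|HkL]|].
    + assert (Hf : forall y, fst (upd lab k (fst (lab k), COMP) y) = fst (lab y)).
      { intros y; unfold upd; destruct (Nat.eqb_spec y k); subst; auto. }
      exists {| qsig := qsig q; qin := qin q; qrv := qrv q; qcp := upd (qcp q) k (Some A2) |}.
      exists L; cbn. repeat split; auto.
      * rewrite Hsig. apply map_ext. intros y. rewrite Hf. auto.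
      * intros y Hy HC. destruct (Nat.eq_dec y k) as [->|Hyk]; auto.
        rewrite upd_neq in HC by auto. auto.
      * intros y. destruct (Nat.eq_dec y k) as [->|Hyk].
        -- rewrite !upd_eq. specialize (Hcp k). rewrite H in Hcp. cbn in *. split; [|auto].
           destruct Hcp as [Hc _]. rewrite Hc. auto.
        -- rewrite !upd_neq by auto. auto.
    + assert (Hf : forall y, fst (upd lab k (fst (lab k), COMP) y) = fst (lab y)).
      { intros y; unfold upd; destruct (Nat.eqb_spec y k); subst; auto. }
      exists {| qsig := map (fun y => fst (lab y)) (k :: L); qin := qin q; qrv := qrv q; qcp := upd (qcp q) k (Some A2) |}.
      exists (k :: L); cbn. repeat split; auto.
      * f_equal; [rewrite upd_eq; auto|]. apply map_ext. intros y. rewrite Hf. auto.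
      * constructor; auto.
      * intros y [<-|Hy]; auto.
      * intros y Hy HC. destruct (Nat.eq_dec y k) as [->|Hyk]; auto.
        right. rewrite upd_neq in HC by auto. auto.
      * intros y Hy C. destruct (H2 k y C) as (_ & _ & Hc).
        destruct (H1 k HOk) as [[C1 C2]|[C1 C2]]; congruence.
      * intros y. destruct (Nat.eq_dec y k) as [->|Hyk].
        -- rewrite !upd_eq. specialize (Hcp k). rewrite H in Hcp. cbn in *. split; [|auto].
           destruct Hcp as [Hc _]. rewrite Hc. auto.
        -- rewrite !upd_neq by auto.
           apply (CPrel_iff _ _ _ (In y L)); [|auto]. split; [auto|intros [C|C]; [congruence|auto]].
    + exists {| qsig := qsig q; qin := qin q; qrv := qrv q; qcp := upd (qcp q) k (Some A2) |}.
      exists L; cbn. repeat split; auto.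
      * intros y. destruct (Nat.eq_dec y k) as [->|Hyk].
        -- rewrite !upd_eq. specialize (Hcp k). rewrite H in Hcp. cbn in *. split; [|auto].
           destruct Hcp as [Hc _]. rewrite Hc. auto.
        -- rewrite !upd_neq by auto. auto.
  -
    exists {| qsig := qsig q; qin := qin q; qrv := qrv q; qcp := upd (qcp q) k (Some R1) |}.
    exists L; cbn. repeat split; auto.
    intros y. destruct (Nat.eq_dec y k) as [->|Hyk].
    + rewrite !upd_eq. specialize (Hcp k). rewrite H in Hcp. cbn in *. split; [|auto]. apply Hcp.
    + rewrite !upd_neq by auto. auto.
  -
    match goal with Hx : O k' = true |- _ => rename Hx into HOk' end.
    assert (Hkk : k <> k') by (intro; subst; destruct (H1 k' HOk') as [[C _]|[C _]]; congruence).
    set (L' := filter (fun y => negb (Nat.eqb y k')) L).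
    assert (HL' : forall y, In y L' <-> In y L /\ y <> k').
    { intros y; unfold L'; rewrite filter_In. destruct (Nat.eqb_spec y k'); cbn; intuition. }
    exists {| qsig := map (fun y => fst (lab y)) L'; qin := qin q; qrv := upd rv k (Some (fst (lab k')));
       qcp := fun y => if Nat.eqb y k then Some R2 else if Nat.eqb y k' then
               (match qcp q y with Some A1 => Some A | c => c end) else qcp q y |}.
    exists L'; cbn. repeat split; auto.
    + apply NoDup_filter; auto.
    + intros y Hy. apply HL' in Hy as [Hy Hyk]. rewrite upd_neq; auto.
    + intros y. unfold upd. destruct (Nat.eqb_spec y k'); [discriminate|]. intros Hy HC. apply HL'; auto.
    + apply (ok_mono lt); [intros x y _ _ [Hxy _]; auto|]. apply ok_filter; auto.
    + intros y. destruct (Nat.eq_dec y k) as [->|Hyk].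
      * rewrite !upd_eq, Nat.eqb_refl. specialize (Hcp k). rewrite H in Hcp. cbn in *. split; [|auto]. apply Hcp.
      * rewrite !upd_neq by auto. destruct (Nat.eqb_spec y k) as [|_]; [contradiction|].
        destruct (Nat.eqb_spec y k') as [->|Hyk'].
        -- rewrite upd_eq. specialize (Hcp k'). destruct (H1 k' HOk') as [[C _]|[C _]]; rewrite C in *; cbn in *.
           ++ destruct Hcp as [Hi [(-> & _)|(-> & _)]]; split; auto.
           ++ destruct Hcp as [Hi ->]. auto.
        -- rewrite upd_neq by auto. apply (CPrel_iff _ _ _ (In y L)); [|auto].
           rewrite HL'. tauto.
  -
    exists {| qsig := qsig q; qin := qin q; qrv := upd rv k (Some EMPTY); qcp := upd (qcp q) k (Some R2) |}.
    exists L; cbn. repeat split; auto.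
    intros y. destruct (Nat.eq_dec y k) as [->|Hyk].
    + rewrite !upd_eq. specialize (Hcp k). rewrite H in Hcp. cbn in *. split; [|auto]. apply Hcp.
    + rewrite !upd_neq by auto. auto.
  -
    exists {| qsig := qsig q; qin := qin q; qrv := qrv q; qcp := upd (qcp q) k (Some R3) |}.
    exists L; cbn. repeat split; auto.
    intros y. destruct (Nat.eq_dec y k) as [->|Hyk].
    + rewrite !upd_eq. specialize (Hcp k). rewrite H in Hcp. cbn in *. split; [|auto]. apply Hcp.
    + rewrite !upd_neq by auto. auto.
Qed.

Lemma steps_app (L : LTS) s1 t1 s2 t2 s3 : steps L s1 t1 s2 -> steps L s2 t2 s3 -> steps L s1 (t1 ++ t2) s3.
Proof. induction 1; cbn; auto. intros; econstructor; eauto. Qed.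

Lemma steps_eq (L : LTS) s t s1 s2 : steps L s t s1 -> s1 = s2 -> steps L s t s2.
Proof. intros H ->; auto. Qed.

Lemma one_step (L : LTS) s l s' : step L s l s' -> steps L s [l] s'.
Proof. intros; econstructor; eauto; constructor. Qed.

Lemma lin_many : forall (f : nat -> val) W s i rv cp cpT, NoDup W ->
  (forall x, In x W -> cp x = Some A1 /\ i x = Some (f x)) ->
  (forall y, cpT y = if existsb (Nat.eqb y) W then Some A else cp y) ->
  steps AbsQ0 {| qsig := s; qin := i; qrv := rv; qcp := cp |} (map (fun x => LinEnq (f x) x) W)
    {| qsig := map f (rev W) ++ s; qin := i; qrv := rv; qcp := cpT |}.
Proof.
  intros f W; induction W as [|x W IH]; intros s i rv cp cpT Hnd HW HT; cbn.
  - replace cpT with cp by (apply functional_extensionality; intros y; rewrite HT; reflexivity). constructor.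
  - inversion Hnd; subst. destruct (HW x (or_introl eq_refl)) as [Hc Hi].
    econstructor. { apply q_lin_enq; eauto. }
    rewrite map_app, <- app_assoc. cbn. apply IH; auto.
    + intros y Hy. rewrite upd_neq by (intro; subst; auto). apply HW; right; auto.
    + intros y. rewrite HT. cbn. unfold upd. destruct (Nat.eqb_spec y x); cbn;
      destruct (existsb (Nat.eqb y) W); auto.
Qed.

Lemma filter_lin f W : filter GammaCRL (map (fun x => LinEnq (f x) x) W) = [].
Proof. induction W; cbn; auto. Qed.

Lemma existsb_rev y P : existsb (Nat.eqb y) (rev P) = existsb (Nat.eqb y) P.
Proof.
  destruct (existsb (Nat.eqb y) (rev P)) eqn:E1, (existsb (Nat.eqb y) P) eqn:E2; auto.
  - apply existsb_In, in_rev in E1. apply existsb_In in E1. congruence.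
  - apply existsb_In in E2. rewrite in_rev in E2. apply existsb_In in E2. congruence.
Qed.

Lemma existsb_false y P : ~ In y P -> existsb (Nat.eqb y) P = false.
Proof. intros H. destruct (existsb (Nat.eqb y) P) eqn:E; auto. apply existsb_In in E. contradiction. Qed.

Lemma qone q l q1 q2 : qstep q l q1 -> q1 = q2 -> steps AbsQ0 q [l] q2.
Proof. intros H ->. apply (one_step AbsQ0); exact H. Qed.

Ltac case_eqb_g := repeat match goal with
 | |- context [Nat.eqb ?a ?b] => destruct (Nat.eqb_spec a b); try subst
 end.

Ltac receq := f_equal; apply functional_extensionality; intros ?y; unfold upd; case_eqb_g; auto; try congruence.

Lemma B_back u l u' q' : AInv u -> astep u l u' -> B u' q' ->
  exists q w, B u q /\ steps AbsQ0 q w q' /\ filter GammaCRL w = filter GammaCRL [l].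
Proof.
  intros [H1 H2] Hs HB. inversion Hs; subst.
  all: destruct q' as [s' i' rv' cp']; destruct HB as (L' & Hsig & Hnd & HinO & HCOMP & Hok & Hrv & Hcp); cbn in *.
  -
    assert (HOk : O k = false) by (destruct (O k) eqn:E; auto; destruct (H1 k E) as [[C _]|[C _]]; congruence).
    pose proof (Hcp k) as Hk. rewrite !upd_eq in Hk. cbn in Hk. destruct Hk as [Hik Hk].
    destruct Hk as [(Hck & _ & HkL) | (Hck & [C|HkL])]; [| discriminate | ].
    + exists {| qsig := s'; qin := upd i' k None; qrv := rv'; qcp := upd cp' k None |}, [InvEnq d k].
      split; [|split; [|reflexivity]].
      * exists L'. cbn. repeat split; auto.
        -- rewrite Hsig. apply map_ext_in. intros y Hy. rewrite upd_neq; auto. intro; subst; auto.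
        -- intros y Hy. specialize (HinO y Hy). rewrite upd_neq in HinO; auto. intro; subst; auto.
        -- intros y Hy HC. assert (y <> k) by congruence. apply HCOMP; rewrite upd_neq by auto; auto.
        -- apply (ok_mono (fun a b => lt a b \/ (b = k /\ O a = true /\ snd (lab a) = COMP))); auto.
        -- intros y; destruct (Nat.eq_dec y k) as [->|Hyk].
           ++ rewrite H, !upd_eq. cbn. auto.
           ++ specialize (Hcp y). rewrite !upd_neq in * by auto. auto.
      * eapply qone; [apply q_inv_enq; [apply upd_eq | auto] |]. receq.
    + destruct (in_split _ _ HkL) as (P & S & EL). subst L'.
      assert (HkP : ~ In k P) by (intro C; apply (NoDup_remove_2 _ _ _ Hnd), in_or_app; auto).
      assert (HkS : ~ In k S) by (intro C; apply (NoDup_remove_2 _ _ _ Hnd), in_or_app; auto).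
      assert (HndPS := NoDup_remove_1 _ _ _ Hnd).
      assert (HPS : forall x, In x P -> ~ In x S) by (intros x Hx; apply (NoDup_app_disj P S); auto).
      assert (HP : forall x, In x P -> x <> k /\ O x = true /\ cp x = Some A1).
      { intros x Hx. assert (Hxk : x <> k) by (intro; subst; auto).
        assert (HOx : O x = true) by (specialize (HinO x (in_or_app _ _ _ (or_introl Hx))); rewrite upd_neq in HinO; auto).
        destruct (H1 x HOx) as [[C1 C2]|[C1 C2]]; [repeat split; auto|].
        exfalso. apply ok_app in Hok as (_ & _ & Hx'). apply (Hx' x k Hx (or_introl eq_refl)). right. auto. }
      assert (HiP : forall x, In x P -> i' x = Some (fst (lab x)) /\ cp' x = Some A).
      { intros x Hx. destruct (HP x Hx) as (Hxk & HOx & Hcx). specialize (Hcp x).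
        rewrite !upd_neq in Hcp by auto. rewrite Hcx in Hcp. cbn in Hcp.
        destruct Hcp as [Hi [(_ & _ & C)|(Hc & _)]]; [exfalso; apply C; apply in_or_app; auto|auto]. }
      exists {| qsig := map (fun y => fst (lab y)) S; qin := upd i' k None; qrv := rv';
                qcp := fun y => if Nat.eqb y k then None else if existsb (Nat.eqb y) P then Some A1 else cp' y |},
             ([InvEnq d k; LinEnq d k] ++ map (fun x => LinEnq (fst (lab x)) x) (rev P)).
      split; [|split; [|rewrite filter_app, filter_lin; reflexivity]].
      * exists S. cbn. repeat split; auto.
        -- apply (NoDup_app_remove_l _ _ HndPS).
        -- intros y Hy. assert (y <> k) by (intro; subst; auto).
           specialize (HinO y (in_or_app _ _ _ (or_intror (in_cons k y S Hy)))). rewrite upd_neq in HinO; auto.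
        -- intros y Hy HC. assert (Hyk : y <> k) by congruence.
           specialize (HCOMP y). rewrite !upd_neq in HCOMP by auto.
           apply in_app_or in HCOMP as [C|[C|C]]; auto.
           ++ destruct (HP y C) as (_ & _ & C2). destruct (H1 y Hy) as [[_ C3]|[C3 _]]; congruence.
           ++ congruence.
        -- apply ok_app in Hok as (_ & Hok & _). destruct Hok as [_ Hok].
           apply (ok_mono (fun a b => lt a b \/ (b = k /\ O a = true /\ snd (lab a) = COMP))); auto.
        -- intros y; destruct (Nat.eq_dec y k) as [->|Hyk].
           ++ rewrite H, Nat.eqb_refl, upd_eq. cbn. auto.
           ++ destruct (Nat.eqb_spec y k) as [|_]; [contradiction|]. rewrite upd_neq by auto.
              destruct (existsb (Nat.eqb y) P) eqn:E.
              ** apply existsb_In in E. destruct (HP y E) as (_ & HOy & Hcy). destruct (HiP y E) as [Hiy _].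
                 rewrite Hcy. cbn. split; auto.
              ** assert (HyP : ~ In y P) by (intro C; apply existsb_In in C; congruence).
                 specialize (Hcp y). rewrite !upd_neq in Hcp by auto.
                 apply (CPrel_iff _ _ _ (In y (P ++ k :: S))); auto.
                 split; [intros C; apply in_app_or in C as [C|[C|C]]; auto; congruence | intros; apply in_or_app; right; right; auto].
      * eapply steps_app.
        { econstructor; [apply q_inv_enq; [cbn; rewrite Nat.eqb_refl; reflexivity | auto]|].
          econstructor; [apply q_lin_enq; apply upd_eq|]. constructor. }
        eapply steps_eq; [apply (lin_many (fun x => fst (lab x)) (rev P) _ _ _ _ cp')|].
        -- apply NoDup_rev, (NoDup_app_remove_r _ _ HndPS).
        -- intros x Hx. apply in_rev in Hx. destruct (HP x Hx) as (Hxk & _ & _).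
           rewrite !upd_neq by auto. destruct (Nat.eqb_spec x k); [contradiction|].
           destruct (HiP x Hx) as [Hix _]. split; auto.
           replace (existsb (Nat.eqb x) P) with true; auto. symmetry; apply existsb_In; auto.
        -- intros y. rewrite existsb_rev. destruct (Nat.eq_dec y k) as [->|Hyk].
           ++ rewrite existsb_false, upd_eq; auto.
           ++ rewrite !upd_neq by auto. destruct (Nat.eqb_spec y k); [contradiction|].
              destruct (existsb (Nat.eqb y) P) eqn:E; auto.
              apply existsb_In in E. apply HiP; auto.
        -- rewrite rev_involutive, Hsig, map_app. cbn. rewrite upd_eq. f_equal.
           ++ f_equal. apply map_ext_in; intros y Hy; rewrite upd_neq; auto; intro; subst; auto.
              f_equal. apply map_ext_in; intros y Hy; rewrite upd_neq; auto; intro; subst; auto.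
           ++ receq.
  -
    pose proof (Hcp k) as Hk. rewrite !upd_eq in Hk. cbn in Hk. destruct Hk as [Hik Hck].
    assert (Hf : forall y, fst ((if O k then upd lab k (fst (lab k), COMP) else lab) y) = fst (lab y)).
    { intros y; destruct (O k); auto. unfold upd; destruct (Nat.eqb_spec y k); subst; auto. }
    exists {| qsig := s'; qin := i'; qrv := rv'; qcp := upd cp' k (Some A) |}, [RetEnq k].
    split; [|split; [|reflexivity]].
    + exists L'. cbn. repeat split; auto.
      * rewrite Hsig. apply map_ext. intros y. apply Hf.
      * intros y Hy HC. destruct (Nat.eq_dec y k) as [->|Hyk].
        -- destruct (H1 k Hy) as [[_ C]|[C _]]; congruence.
        -- apply HCOMP; auto. destruct (O k); auto. rewrite upd_neq; auto.
      * intros y; destruct (Nat.eq_dec y k) as [->|Hyk].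
        -- rewrite H, upd_eq. cbn. rewrite Hik, Hf. split; auto. right; split; auto.
           destruct (O k) eqn:HOk; auto. right. apply HCOMP; auto. rewrite upd_eq; auto.
        -- specialize (Hcp y). rewrite !upd_neq in * by auto. rewrite Hf in Hcp. auto.
    + eapply qone; [apply q_ret_enq; apply upd_eq |]. receq.
  -
    pose proof (Hcp k) as Hk. rewrite !upd_eq in Hk. cbn in Hk. destruct Hk as [Hik Hck].
    exists {| qsig := s'; qin := i'; qrv := rv'; qcp := upd cp' k None |}, [InvDeq k].
    split; [|split; [|reflexivity]].
    + exists L'. cbn. repeat split; auto.
      intros y; destruct (Nat.eq_dec y k) as [->|Hyk].
      * rewrite H, upd_eq. cbn. auto.
      * specialize (Hcp y). rewrite !upd_neq in * by auto. auto.
    + eapply qone; [apply q_inv_deq; apply upd_eq |]. receq.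
  -
    match goal with Hx : O k' = true |- _ => rename Hx into HOk' end.
    match goal with Hx : forall o, O o = true -> ~ lt o k' |- _ => rename Hx into Hmin end.
    assert (Hkk : k <> k') by (intro; subst; destruct (H1 k' HOk') as [[C _]|[C _]]; congruence).
    assert (Hk'L : ~ In k' L') by (intro C; specialize (HinO k' C); rewrite upd_eq in HinO; discriminate).
    pose proof (Hcp k) as Hk. rewrite !upd_eq in Hk. cbn in Hk. destruct Hk as [Hik Hck].
    exists {| qsig := s' ++ [fst (lab k')]; qin := i'; qrv := rv; qcp := upd cp' k (Some R1) |}, [LinDeq (fst (lab k')) k].
    split; [|split; [|reflexivity]].
    + exists (L' ++ [k']). cbn. repeat split; auto.
      * rewrite Hsig, map_app. reflexivity.
      * apply NoDup_app; auto. repeat constructor; auto. intros a Ha [<-|[]]; auto.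
      * intros y Hy. apply in_app_or in Hy as [Hy|[<-|[]]]; auto.
        specialize (HinO y Hy). assert (y <> k') by (intro; subst; auto). rewrite upd_neq in HinO; auto.
      * intros y Hy HC. destruct (Nat.eq_dec y k') as [->|Hyk']; [apply in_or_app; right; left; auto|].
        apply in_or_app; left. apply HCOMP; auto. rewrite upd_neq; auto.
      * apply ok_app. split; [|split].
        -- apply (ok_mono (fun a b => lt a b /\ a <> k' /\ b <> k')); auto.
           intros x y Hx Hy Hxy. repeat split; auto; intro; subst; auto.
        -- cbn; split; auto.
        -- intros x y Hx [<-|[]]. apply Hmin. specialize (HinO x Hx).
           rewrite upd_neq in HinO; auto. intro; subst; auto.
      * intros y; destruct (Nat.eq_dec y k) as [->|Hyk].
        -- rewrite H, upd_eq. cbn. auto.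
        -- specialize (Hcp y). rewrite !upd_neq in * by auto.
           destruct (Nat.eq_dec y k') as [->|Hyk'].
           ++ rewrite upd_eq in Hcp. destruct (H1 k' HOk') as [[C _]|[C _]]; rewrite C in *; cbn in *.
              ** destruct Hcp as [Hi [(_ & C2 & _)|(Hc & _)]]; [discriminate|]. split; auto. right; split; auto.
                 right; apply in_or_app; right; left; auto.
              ** auto.
           ++ rewrite upd_neq in Hcp by auto. apply (CPrel_iff _ _ _ (In y L')); auto.
              split; [intros; apply in_or_app; auto | intros C; apply in_app_or in C as [C|[C|[]]]; auto; congruence].
    + eapply qone; [apply q_lin_deq; apply upd_eq |].
      f_equal; apply functional_extensionality; intros y; [rewrite Hrv; auto|]. unfold upd; case_eqb_g; auto; congruence.
  -
    match goal with Hx : forall o, O o = true -> snd (lab o) = PEND |- _ => rename Hx into Hall end.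
    pose proof (Hcp k) as Hk. rewrite !upd_eq in Hk. cbn in Hk. destruct Hk as [Hik Hck].
    assert (HL : forall x, In x L' -> x <> k /\ O x = true /\ cp x = Some A1 /\ i' x = Some (fst (lab x)) /\ cp' x = Some A).
    { intros x Hx. specialize (HinO x Hx).
      destruct (H1 x HinO) as [[C1 C2]|[C1 C2]]; [|specialize (Hall x HinO); congruence].
      assert (Hxk : x <> k) by congruence. specialize (Hcp x). rewrite upd_neq, C1 in Hcp by auto. cbn in Hcp.
      destruct Hcp as [Hi [(_ & _ & C)|(Hc & _)]]; [contradiction|]. repeat split; auto. }
    assert (HkL : ~ In k L') by (intro C; destruct (HL k C); auto).
    exists {| qsig := []; qin := i'; qrv := rv;
              qcp := fun y => if Nat.eqb y k then Some R1 else if existsb (Nat.eqb y) L' then Some A1 else cp' y |},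
           ([LinDeq EMPTY k] ++ map (fun x => LinEnq (fst (lab x)) x) (rev L')).
    split; [|split; [|rewrite filter_app, filter_lin; reflexivity]].
    + exists []. cbn. repeat split; auto; try constructor; try tauto.
      * intros y Hy HC. specialize (Hall y Hy). congruence.
      * intros y; destruct (Nat.eq_dec y k) as [->|Hyk].
        -- rewrite H, Nat.eqb_refl. cbn. auto.
        -- destruct (Nat.eqb_spec y k); [contradiction|].
           destruct (existsb (Nat.eqb y) L') eqn:E.
           ++ apply existsb_In in E. destruct (HL y E) as (_ & HOy & Hcy & Hiy & _).
              rewrite Hcy. cbn. split; auto.
           ++ assert (HyL : ~ In y L') by (intro C; apply existsb_In in C; congruence).
              specialize (Hcp y). rewrite !upd_neq in Hcp by auto.
              apply (CPrel_iff _ _ _ (In y L')); auto. tauto.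
    + eapply steps_app.
      { apply (one_step AbsQ0). apply q_lin_deq_empty. cbn. rewrite Nat.eqb_refl. reflexivity. }
      eapply steps_eq; [apply (lin_many (fun x => fst (lab x)) (rev L') _ _ _ _ cp')|].
      * apply NoDup_rev; auto.
      * intros x Hx. apply in_rev in Hx. destruct (HL x Hx) as (Hxk & _ & _ & Hix & _).
        rewrite upd_neq by auto. destruct (Nat.eqb_spec x k); [contradiction|].
        split; auto. replace (existsb (Nat.eqb x) L') with true; auto. symmetry; apply existsb_In; auto.
      * intros y. rewrite existsb_rev. destruct (Nat.eq_dec y k) as [->|Hyk].
        -- rewrite existsb_false, upd_eq; auto.
        -- rewrite upd_neq by auto. destruct (Nat.eqb_spec y k); [contradiction|].
           destruct (existsb (Nat.eqb y) L') eqn:E; auto.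
           apply existsb_In in E. apply HL; auto.
      * rewrite rev_involutive, app_nil_r, Hsig. f_equal.
        apply functional_extensionality; intros y; rewrite Hrv; auto.
  -
    pose proof (Hcp k) as Hk. rewrite !upd_eq in Hk. cbn in Hk. destruct Hk as [Hik Hck].
    exists {| qsig := s'; qin := i'; qrv := rv'; qcp := upd cp' k (Some R2) |}, [RetDeq d k].
    split; [|split; [|reflexivity]].
    + exists L'. cbn. repeat split; auto.
      intros y; destruct (Nat.eq_dec y k) as [->|Hyk].
      * rewrite H, upd_eq. cbn. auto.
      * specialize (Hcp y). rewrite !upd_neq in * by auto. auto.
    + eapply qone; [apply q_ret_deq; [apply upd_eq | rewrite Hrv; auto] |]. receq.
Qed.


Definition fsHA (s : hstate) (u : astate) : Prop :=
  (exists idx, HInv s u idx) /\ (s = hinit -> u = ainit).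

Lemma HInv_init : HInv hinit ainit (fun _ => 0).
Proof. constructor; cbn; intros; try discriminate; try tauto; try contradiction. Qed.

Lemma not_init s g s' : hstep s g s' -> s' <> hinit.
Proof.
  intros Hs E. apply (f_equal hloc_of) in E. inversion Hs; subst; cbn in E;
  apply (f_equal (fun f => f k)) in E; rewrite upd_eq in E; discriminate.
Qed.

Lemma vis_finish s g s' u u' idx : astep u g u' -> HInv s' u' idx -> hstep s g s' ->
  exists sig1 sig2 u'',
    forallb (fun l => alpha AbsQ l && negb (GammaCRL l)) sig1 = true /\
    forallb (fun l => alpha AbsQ l && negb (GammaCRL l)) sig2 = true /\
    steps AbsQ u (sig1 ++ g :: sig2) u'' /\ fsHA s' u''.
Proof.
  intros Ha Hi Hs. exists [], [], u'. repeat split; auto.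
  - cbn. econstructor; [exact Ha | constructor].
  - exists idx; auto.
  - intros E; exfalso; eapply not_init; eauto.
Qed.

Lemma sim_HA : fwd_sim GammaCRL HWQ AbsQ fsHA.
Proof.
  split; [|split; [|split; [|split]]].
  - intros l H; unfold GammaCRL; rewrite H; reflexivity.
  - intros l H; destruct l; cbn in *; auto.
  - intros u; split.
    + intros [_ H]; apply H; reflexivity.
    + intros ->; split; [exists (fun _ => 0); apply HInv_init | auto].
  - intros s g s' u Hs HG [[idx Hi] _]. cbn in Hs. destruct s as [it b lc].
    inversion Hs; subst; cbn in HG; try discriminate.
    + edestruct inv_enq_sim as (u' & Ha & Hi'); eauto. eapply vis_finish; eauto.
    + edestruct ret_enq_sim as (u' & Ha & Hi'); eauto. eapply vis_finish; eauto.
    + edestruct inv_deq_sim as (u' & Ha & Hi'); eauto. eapply vis_finish; eauto.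
    + edestruct swapval_sim as (u' & Ha & Hi'); eauto. eapply vis_finish; eauto.
    + edestruct ret_deq_sim as (u' & Ha & Hi'); eauto. eapply vis_finish; eauto.
  - intros s e s' u Hs HG [[idx Hi] _]. cbn in Hs.
    destruct e; cbn in HG; try discriminate.
    + inversion Hs.
    + destruct (tau_step _ _ _ _ Hs Hi) as [idx' Hi'].
      exists [], u. repeat split; [constructor | exists idx'; auto | ].
      intros E; exfalso; eapply not_init; eauto.
Qed.

Lemma filter_none (G : label -> bool) (al : label -> bool) sig :
  forallb (fun l => al l && negb (G l)) sig = true -> filter G sig = [].
Proof.
  induction sig as [|x sig IH]; cbn; auto. intros H. apply andb_true_iff in H as [H1 H2].
  apply andb_true_iff in H1 as [_ H1]. destruct (G x); cbn in *; [discriminate|]. auto.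
Qed.

Lemma fwd_traces G L1 L2 fs : fwd_sim G L1 L2 fs ->
  forall s t s', steps L1 s t s' -> forall u, fs s u ->
  exists t2 u', steps L2 u t2 u' /\ filter G t = filter G t2.
Proof.
  intros (_ & _ & _ & HG & HN). induction 1 as [s|s l s1 t s2 Hst Hsteps IH]; intros u Hu.
  - exists [], u; split; [constructor|reflexivity].
  - destruct (G l) eqn:Gl.
    + destruct (HG _ _ _ _ Hst Gl Hu) as (sig1 & sig2 & u1 & F1 & F2 & S1 & Hu1).
      destruct (IH u1 Hu1) as (t2 & u' & S2 & E).
      exists ((sig1 ++ l :: sig2) ++ t2), u'. split; [eapply steps_app; eauto|].
      rewrite !filter_app, (filter_none _ _ _ F1). cbn. rewrite Gl, (filter_none _ _ _ F2), E. reflexivity.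
    + destruct (HN _ _ _ _ Hst Gl Hu) as (sig & u1 & F & S1 & Hu1).
      destruct (IH u1 Hu1) as (t2 & u' & S2 & E).
      exists (sig ++ t2), u'. split; [eapply steps_app; eauto|].
      rewrite filter_app, (filter_none _ _ _ F). cbn. rewrite Gl. exact E.
Qed.

Lemma absq_fwd u t un : steps AbsQ u t un -> AInv u -> (exists q, B u q) -> exists qn, B un qn.
Proof.
  induction 1 as [s|s l s1 t s2 Hst Hsteps IH]; auto. intros HI [q Hq].
  apply IH; [eapply AInv_step; eauto|]. eapply B_step; eauto.
Qed.

Lemma absq_back u t un : steps AbsQ u t un -> AInv u -> forall qn, B un qn ->
  exists q w, B u q /\ steps AbsQ0 q w qn /\ filter GammaCRL w = filter GammaCRL t.
Proof.
  induction 1 as [s|s l s1 t s2 Hst Hsteps IH]; intros HI qn Hqn.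
  - exists qn, []; split; auto; split; [constructor|reflexivity].
  - destruct (IH (AInv_step _ _ _ HI Hst) qn Hqn) as (q1 & w1 & Hq1 & S1 & E1).
    destruct (B_back _ _ _ _ HI Hst Hq1) as (q & w0 & Hq & S0 & E0).
    exists q, (w0 ++ w1). split; auto. split; [eapply steps_app; eauto|].
    rewrite filter_app, E0, E1. change (l :: t) with ([l] ++ t). rewrite filter_app. reflexivity.
Qed.

Lemma absq_ref t : trace AbsQ t -> exists t', trace AbsQ0 t' /\ filter GammaCRL t = filter GammaCRL t'.
Proof.
  intros [un Hs].
  destruct (absq_fwd _ _ _ Hs AInv_init (ex_intro _ _ B_init)) as [qn Hqn].
  destruct (absq_back _ _ _ Hs AInv_init qn Hqn) as (q & w & Hq & Sw & E).
  apply B_init_inv in Hq. subst q. exists w. split; [exists qn; exact Sw | auto].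
Qed.

Lemma filter_CR l : filter isCR l = filter isCR (filter GammaCRL l).
Proof. induction l as [|a l IH]; cbn; auto. destruct a; cbn; rewrite IH; auto. Qed.

Lemma hwq_ref t : trace HWQ t -> exists t', trace AbsQ0 t' /\ filter GammaCRL t = filter GammaCRL t'.
Proof.
  intros [s Hs].
  assert (H0 : fsHA hinit ainit) by (split; [exists (fun _ => 0); apply HInv_init | auto]).
  destruct (fwd_traces _ _ _ _ sim_HA _ _ _ Hs _ H0) as (t2 & u' & S2 & E2).
  destruct (absq_ref t2 (ex_intro _ _ S2)) as (t' & Ht' & E').
  exists t'. split; auto. congruence.
Qed.

Theorem mainTheorem3 :
  (exists fs : St HWQ -> St AbsQ -> Prop, fwd_sim GammaCRL HWQ AbsQ fs) /\
  Gamma_refines GammaCRL HWQ AbsQ0 /\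
  refines HWQ AbsQ0.
Proof.
  split; [exists fsHA; exact sim_HA|split].
  - intros t Ht. apply hwq_ref; auto.
  - intros t Ht. destruct (hwq_ref t Ht) as (t' & Ht' & E). exists t'. split; auto.
    rewrite (filter_CR t), (filter_CR t'), E. reflexivity.
Qed.
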